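(* Suppose $e>1$. For Serre weights $V_{\vec t,\vec s},V_{\vec{t'},\vec{s'}}$, consider the inflation–restriction exact sequence $$0\to H^1(\Gamma,V_{\vec t,\vec s}^\vee\otimes V_{\vec{t'},\vec{s'}})\xrightarrow{\mathrm{inf}}H^1(\mathcal K/\mathcal K_2,V_{\vec t,\vec s}^\vee\otimes V_{\vec{t'},\vec{s'}})\xrightarrow{\mathrm{res}}H^1(\mathcal K_1/\mathcal K_2,V_{\vec t,\vec s}^\vee\otimes V_{\vec{t'},\vec{s'}})^\Gamma.$$ Then the map $\mathrm{res}$ is a split surjection.
   Context: $p$ prime, $K/\mathbb Q_p$ finite with ring of integers $\mathcal O_K$, uniformizer $\pi$, residue field $k$, $f=[k:\mathbb F_p]$, ramification index $e$; $\overline{\mathbb F}$ an algebraic closure of $\mathbb F_p$; fix $\sigma_{f-1}:k\to\overline{\mathbb F}$, $\sigma_{f-1-i}=\sigma_{f-1}^{p^i}$. Serre weight: $V_{\vec t,\vec s}=\bigotimes_{i=0}^{f-1}(\det^{t_i}\otimes\mathrm{Sym}^{s_i}k^2)\otimes_{k,\sigma_i}\overline{\mathbb F}$ with $s_i\in[0,p-1]$. $\Gamma=\mathrm{GL}_2(k)\cong\mathcal K/\mathcal K_1$, $\mathcal K=\mathrm{GL}_2(\mathcal O_K)$, $\mathcal K_n=1+\pi^nM_2(\mathcal O_K)$; representations of $\Gamma$ are regarded as representations of $\mathcal K/\mathcal K_2$ by inflation; $V^\vee$ denotes the dual. *)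

(* Defs.v *)
From HB Require Import structures.
From mathcomp Require Import all_boot all_order all_fingroup all_algebra.
Set Implicit Arguments. Unset Strict Implicit. Unset Printing Implicit Defensive.
Import GRing.Theory.
Local Open Scope ring_scope.

(* O_K / pi^2 for e > 1 : the dual numbers k[eps]/(eps^2) = k[X]/(X^2).     *)
Definition dualnum (k : finFieldType) := {poly %/ ('X^2 : {poly k})}.
HB.instance Definition _ (k : finFieldType) := GRing.ComUnitRing.on (dualnum k).
HB.instance Definition _ (k : finFieldType) := Finite.on (dualnum k).

(* K / K_2 = GL_2(O_K / pi^2) *)
Definition GL2mod2 (k : finFieldType) := {'GL_2[dualnum k]}.

(* reduction O_K/pi^2 -> k (constant coefficient) and K/K_2 -> Gamma *)
Definition red_scalar (k : finFieldType) (a : dualnum k) : k := (a : {poly k})`_0.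
Definition red (k : finFieldType) (g : GL2mod2 k) : 'M[k]_2 :=
  map_mx (@red_scalar k) (GLval g).

Definition K1modK2 (k : finFieldType) : {set GL2mod2 k} :=
  [set g | red g == 1%:M].

Definition i1 : 'I_2 := @Ordinal 2 1 (erefl true).

(* sigma_i = sigma_{f-1}^{p^{f-1-i}} *)
Definition sigma_i (k : finFieldType) (F : fieldType) (sigma : {rmorphism k -> F})
  (p f : nat) (i : 'I_f) (x : k) : F := sigma x ^+ (p ^ (f.-1 - i)).

(* Sym^s of the standard representation, basis e1^(s-j) e2^j <-> X^j:
   entry (l, j) of the matrix of [[a,b],[c,d]] is the coefficient of X^l in
   (a + c X)^(s-j) (b + d X)^j. *)
Definition symcoef (F : fieldType) (s j l : nat) (a b c d : F) : F :=
  (((a%:P + c%:P * 'X) ^+ (s - j)) * ((b%:P + d%:P * 'X) ^+ j))`_l.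

(* basis index set of (x)_i Sym^{s_i}: multi-indices j with j_i <= s_i *)
Definition SWidx (p f : nat) (s : 'I_f -> 'I_p) : finType :=
  {j : {ffun 'I_f -> 'I_p} | [forall i, (j i <= s i)%N]}.

(* matrix coefficient (l, j) of V_{t,s} = (x)_i (det^{t_i} (x) Sym^{s_i} k^2) (x)_{k,sigma_i} F *)
Definition rhoSW (k : finFieldType) (F : fieldType) (sigma : {rmorphism k -> F})
  (p f : nat) (t : 'I_f -> int) (s : 'I_f -> 'I_p) (g : 'M[k]_2)
  (l j : SWidx s) : F :=
  \prod_(i < f)
    ((sigma_i sigma p i (\det g)) ^ (t i) *
     symcoef (s i) (val j i) (val l i)
       (sigma_i sigma p i (g ord0 ord0)) (sigma_i sigma p i (g ord0 i1))
       (sigma_i sigma p i (g i1 ord0)) (sigma_i sigma p i (g i1 i1))).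
Arguments rhoSW {k F} sigma {p f} t s g l j.

(* V_{t,s}^dual (x) V_{t',s'} realised as Hom_F(V_{t,s}, V_{t',s'}),
   i.e. matrices indexed by (SWidx s') * (SWidx s). *)
Notation HomSW F s s' := {ffun (SWidx s' * SWidx s) -> F^o}.
HB.instance Definition _ (k : finFieldType) := FinGroup.on (GL2mod2 k).

Definition actHom (k : finFieldType) (F : fieldType) (sigma : {rmorphism k -> F})
  (p f : nat) (t t' : 'I_f -> int) (s s' : 'I_f -> 'I_p)
  (g : GL2mod2 k) (phi : HomSW F s s') : HomSW F s s' :=
  [ffun x => \sum_(l' : SWidx s') \sum_(l : SWidx s)
      rhoSW sigma t' s' (red g) x.1 l' * phi (l', l) *
      rhoSW sigma t s (red (g^-1)%g) l x.2].
Arguments actHom {k F} sigma {p f} t t' s s' g phi.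

Section Cohomology.
Variables (gT : finGroupType) (R : nzRingType) (W : lmodType R).
Variable act : gT -> W -> W.

Definition cocycle1 (H : {set gT}) (c : {ffun gT -> W}) : Prop :=
  forall g h, g \in H -> h \in H -> c (g * h)%g = c g + act g (c h).

Definition coboundary1 (H : {set gT}) (c : {ffun gT -> W}) : Prop :=
  exists w : W, forall g, g \in H -> c g = act g w - w.

Definition conj_cochain (g : gT) (c : {ffun gT -> W}) : {ffun gT -> W} :=
  [ffun n => act g (c (g^-1 * n * g)%g)].

(* the class of the N-cocycle c in H^1(N, W) is fixed by G (i.e. by G/N) *)
Definition invariant_class (G N : {set gT}) (c : {ffun gT -> W}) : Prop :=
  forall g, g \in G -> coboundary1 N (conj_cochain g c - c).

(* res : H^1(G, W) -> H^1(N, W)^{G/N} is a split surjection: there is an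
   R-linear map s : H^1(N,W)^{G/N} -> H^1(G,W) with res o s = id.
   Classes are represented by cocycles; s is given on invariant cocycles,
   must be linear, send cocycles to cocycles, send coboundaries to
   coboundaries (so it descends to H^1), and res(s c) = c in H^1(N, W). *)
Definition res_split_surjective (G N : {set gT}) : Prop :=
  exists s : {ffun gT -> W} -> {ffun gT -> W},
    [/\ forall (a : R) c1 c2,
          cocycle1 N c1 -> invariant_class G N c1 ->
          cocycle1 N c2 -> invariant_class G N c2 ->
          s (a *: c1 + c2) = a *: s c1 + s c2,
        forall c, cocycle1 N c -> invariant_class G N c -> cocycle1 G (s c),
        forall c, cocycle1 N c -> invariant_class G N c ->
          coboundary1 N c -> coboundary1 G (s c) &
        forall c, cocycle1 N c -> invariant_class G N c ->
          coboundary1 N (s c - c)].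
End Cohomology.

(* Main.v *)
Require Import Defs.
From HB Require Import structures.
From mathcomp Require Import all_boot all_order all_fingroup all_algebra.
Set Implicit Arguments. Unset Strict Implicit. Unset Printing Implicit Defensive.
Import GRing.Theory.
Local Open Scope ring_scope.
Import Pdiv.CommonRing Pdiv.RingMonic.

Section Red.
Variable k : finFieldType.
Local Notation D := (dualnum k).

Lemma red_scalarM (a b : D) : red_scalar (a * b) = red_scalar a * red_scalar b.
Proof.
rewrite /red_scalar.
rewrite poly_of_qpolyM.
have m0 : (mk_monic ('X^2 : {poly k}))`_0 = 0 by rewrite mk_monic_Xn coefXn.
set q := (a : {poly k}) * b.
have E := Pdiv.RingMonic.rdivp_eq (monic_mk_monic ('X^2 : {poly k})) q.
rewrite -coef0M.
have : q`_0 = (rdivp q (mk_monic 'X^2) * (mk_monic 'X^2) + rmodp q (mk_monic 'X^2))`_0 by rewrite -E.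
by rewrite coefD coef0M m0 mulr0 add0r => <-.
Qed.

Lemma red_scalarD (a b : D) : red_scalar (a + b) = red_scalar a + red_scalar b.
Proof. by rewrite /red_scalar /= coefD. Qed.
Lemma red_scalarN (a : D) : red_scalar (- a) = - red_scalar a.
Proof. by rewrite /red_scalar /= coefN. Qed.
Lemma red_scalar1 : red_scalar (1 : D) = 1.
Proof. by rewrite /red_scalar /= coefC. Qed.

Lemma red_scalarC (x : k) : red_scalar (qpolyC _ x : D) = x.
Proof. by rewrite /red_scalar qpolyCE coefC. Qed.

Lemma red_scalar_zmod : zmod_morphism (@red_scalar k).
Proof. by move=> x y; rewrite red_scalarD red_scalarN. Qed.
Lemma red_scalar_monoid : monoid_morphism (@red_scalar k).
Proof. by split; [exact: red_scalar1 | exact: red_scalarM]. Qed.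
HB.instance Definition _ := GRing.isZmodMorphism.Build D k (@red_scalar k) red_scalar_zmod.
HB.instance Definition _ := GRing.isMonoidMorphism.Build D k (@red_scalar k) red_scalar_monoid.

Local Notation G := (GL2mod2 k).

Lemma redM (g h : G) : red (g * h)%g = red g *m red h.
Proof. by rewrite /red GL_MxE map_mxM. Qed.
Lemma red1 : red (1%g : G) = 1%:M.
Proof. by rewrite /red GL_1E map_mx1. Qed.
Lemma red_inv_eq (g h : G) : red g = red h -> red (g^-1)%g = red (h^-1)%g.
Proof.
move=> E.
have -> : (g^-1 = g^-1 * h * h^-1)%g by rewrite mulgK.
by rewrite !redM -E -redM mulVg red1 mul1mx.
Qed.

Definition liftmx (g : G) : 'M[D]_2 := map_mx (qpolyC _) (red g).
Lemma liftmx_unit (g : G) : liftmx g \in unitmx.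
Proof.
have H : liftmx g *m liftmx (g^-1)%g = 1%:M.
  by rewrite /liftmx -map_mxM -redM mulgV red1 map_mx1.
exact: (proj1 (mulmx1_unit H)).
Qed.
Definition Lg (g : G) : G := FinRing.Unit (liftmx_unit g).
Lemma LgE (g : G) : GLval (Lg g) = liftmx g. Proof. by []. Qed.

Lemma red_Lg (g : G) : red (Lg g) = red g.
Proof. by apply/matrixP => i j; rewrite /red LgE /liftmx !mxE red_scalarC. Qed.
Lemma LgM (g h : G) : Lg (g * h)%g = (Lg g * Lg h)%g.
Proof.
apply: val_inj; have -> : val (Lg g * Lg h)%g = GLval (Lg g * Lg h)%g by [].
rewrite GL_MxE !LgE; have -> : val (Lg (g * h)%g) = liftmx (g * h)%g by [].
by rewrite /liftmx redM map_mxM.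
Qed.
Lemma Lg1 (n : G) : red n = 1%:M -> Lg n = 1%g.
Proof. move=> E; apply: val_inj; have -> : val (Lg n) = liftmx n by []. by rewrite /liftmx E map_mx1. Qed.
Lemma LgV (g : G) : Lg (g^-1)%g = (Lg g)^-1%g.
Proof. by apply: (mulgI (Lg g)); rewrite -LgM !mulgV Lg1 // red1. Qed.
End Red.

Section Act.
Variables (k : finFieldType) (F : fieldType) (sigma : {rmorphism k -> F}).
Variables (p f : nat) (p_gt0 : (0 < p)%N).
Variables (t t' : 'I_f -> int) (s s' : 'I_f -> 'I_p).

Lemma sigma_i0 (i : 'I_f) : sigma_i sigma p i 0 = 0.
Proof. by rewrite /sigma_i rmorph0 expr0n expn_eq0 (negbTE (lt0n_neq0 p_gt0)) andFb. Qed.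
Lemma sigma_i1 (i : 'I_f) : sigma_i sigma p i 1 = 1.
Proof. by rewrite /sigma_i rmorph1 expr1n. Qed.

Lemma rhoSW1 (tt : 'I_f -> int) (ss : 'I_f -> 'I_p) (l j : SWidx ss) :
  rhoSW sigma tt ss 1%:M l j = (l == j)%:R.
Proof.
rewrite /rhoSW det1 !mxE /=.
have E : forall i : 'I_f, (sigma_i sigma p i 1 ^ tt i *
     symcoef (ss i) (val j i) (val l i) (sigma_i sigma p i 1)
       (sigma_i sigma p i 0) (sigma_i sigma p i 0) (sigma_i sigma p i 1))
    = ((val l i == val j i :> nat)%:R : F).
  move=> i; rewrite !sigma_i1 !sigma_i0 exp1rz mul1r /symcoef.
  by rewrite mul0r addr0 polyC0 polyC1 add0r mul1r expr1n mul1r coefXn.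
rewrite (eq_bigr _ (fun i _ => E i)).
case: (eqVneq l j) => [->|ne].
  by rewrite big1 // => i _; rewrite eqxx.
have [i Hi] : exists i, (val l i : nat) != val j i.
  apply/existsP; apply: contraR ne => /existsPn H.
  apply/eqP/val_inj/ffunP => i; apply/val_inj/eqP.
  by have := H i; rewrite negbK.
by rewrite (bigD1 i) //= (negbTE Hi) mul0r.
Qed.

Lemma actN (g : GL2mod2 k) (phi : HomSW F s s') :
  red g = 1%:M -> actHom sigma t t' s s' g phi = phi.
Proof.
move=> E.
have Eh : red g = red (1%g : GL2mod2 k) by rewrite E red1.
have E' : red (g^-1)%g = 1%:M by rewrite (red_inv_eq Eh) invg1 red1.
apply/ffunP => -[x1 x2]; rewrite ffunE E E' /=.
rewrite (bigD1 x1) //=.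
rewrite [X in _ + X]big1 ?addr0 => [|l' ne]; last first.
  by apply: big1 => l _; rewrite !rhoSW1 eq_sym (negbTE ne) !mul0r.
rewrite (bigD1 x2) //=.
rewrite [X in _ + X]big1 ?addr0 => [|l ne]; last first.
  by rewrite !rhoSW1 (negbTE ne) mulr0.
by rewrite !rhoSW1 !eqxx mul1r mulr1.
Qed.

Lemma act0 (g : GL2mod2 k) : actHom sigma t t' s s' g 0 = 0.
Proof.
apply/ffunP => x; rewrite !ffunE big1 // => l' _; rewrite big1 // => l _.
by rewrite ffunE mulr0 mul0r.
Qed.

Lemma act_red (g h : GL2mod2 k) : red g = red h ->
  actHom sigma t t' s s' g = actHom sigma t t' s s' h.
Proof. by move=> E; rewrite /actHom (red_inv_eq E) E. Qed.

End Act.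

Lemma gid (gT : finGroupType) (x y a b : gT) :
  ((x * y) * (a * b)^-1 = (x * a^-1) * (a * (y * b^-1) * a^-1))%g.
Proof. by rewrite invMg !mulgA mulgKV. Qed.
Lemma gid2 (gT : finGroupType) (a m : gT) :
  (a^-1 * (a * m * a^-1) * a = m)%g.
Proof. by rewrite !mulgA mulVg mul1g mulgKV. Qed.

Theorem proposition2p8
  (p : nat) (p_prime : prime p)
  (F : closedFieldType) (charF : p \in [pchar F])
  (F_alg_over_Fp : forall x : F, exists n : nat, (0 < n)%N /\ x ^+ (p ^ n) = x)
  (k : finFieldType) (f : nat) (f_gt0 : (0 < f)%N) (card_k : #|k| = (p ^ f)%N)
  (sigma : {rmorphism k -> F})
  (t t' : 'I_f -> int) (s s' : 'I_f -> 'I_p) :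
  res_split_surjective (actHom sigma t t' s s')
    [set: GL2mod2 k] (K1modK2 k).
Proof.
have p_gt0 := prime_gt0 p_prime.
set act := actHom sigma t t' s s'.
have actN' : forall n, n \in K1modK2 k -> forall w, act n w = w.
  by move=> n; rewrite inE => /eqP E w; apply: actN.
have act0' : forall g, act g 0 = 0 by move=> g; apply: act0.
pose nu (g : GL2mod2 k) := (g * (Lg g)^-1)%g.
have nuN : forall g, nu g \in K1modK2 k.
  move=> g; rewrite inE /nu redM -LgV red_Lg -redM mulgV red1 //.
have conjN : forall g n, n \in K1modK2 k -> (Lg g * n * (Lg g)^-1)%g \in K1modK2 k.
  move=> g n; rewrite !inE => /eqP E; rewrite !redM E mulmx1 -redM mulgV red1 //.
exists (fun c => [ffun g => c (nu g)]); split.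
- by move=> a c1 c2 _ _ _ _; apply/ffunP => g; rewrite !ffunE.
- move=> c cc inv g h _ _; rewrite !ffunE.
  have -> : nu (g * h)%g = (nu g * (Lg g * nu h * (Lg g)^-1))%g.
    by rewrite /nu LgM gid.
  rewrite (cc _ _ (nuN g) (conjN g _ (nuN h))) (actN' _ (nuN g)).
  have key : c (Lg g * nu h * (Lg g)^-1)%g = act g (c (nu h)).
    have [w Hw] := inv (Lg g) (in_setT _).
    have := Hw _ (conjN g (nu h) (nuN h)).
    rewrite (actN' _ (conjN g (nu h) (nuN h))) subrr !ffunE gid2.
    move/eqP; rewrite subr_eq0 => /eqP <-.
    by rewrite /act (act_red sigma t t' s s' (red_Lg g)).
  by rewrite key.
- move=> c cc inv [w Hw]; exists 0 => g _; rewrite ffunE Hw ?nuN // actN' ?nuN //.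
  by rewrite subrr act0' subrr.
- move=> c cc inv; exists 0 => n nN; rewrite !ffunE /nu.
  move: (nN); rewrite inE => /eqP E.
  by rewrite Lg1 // invg1 mulg1 subrr act0' subrr.
Qed.
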